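(* Fix integers $T\ge 1$ and $1\le T_n\le T$, a number $\bar\epsilon_n>0$, and rates $q_n>0$, $q>0$. Define $\epsilon_n^1,\dots,\epsilon_n^T$ recursively by $$\epsilon_n^t=\begin{cases}\dfrac{\bar\epsilon_n-\sum_{\tau=1}^{t-1}\epsilon_n^\tau}{T-t+1}\left(\dfrac{q_n}{q}\right)^2, & t<T_n,\\[2ex] \dfrac{\bar\epsilon_n-\sum_{\tau=1}^{t-1}\epsilon_n^\tau}{T-t+1}, & t\ge T_n.\end{cases}$$ Then for $1\le t<T_n$, $$\epsilon_n^t=\frac{\bar\epsilon_n}{T-t+1}\left(\frac{q_n}{q}\right)^2\prod_{i=1}^{t-1}\left(1-\frac{1}{T-t+1+i}\left(\frac{q_n}{q}\right)^2\right),$$ and for $T_n\le t\le T$, $$\epsilon_n^t=\frac{\bar\epsilon_n}{T-T_n+1}\prod_{i=1}^{T_n-1}\left(1-\frac{1}{T-T_n+1+i}\left(\frac{q_n}{q}\right)^2\right).$$ (Empty products equal $1$.)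
   Context: In the paper's time-adaptive differentially private federated learning scheme, $\bar\epsilon_n$ is the total Rényi-DP privacy budget of client $n$, $T$ is the number of training rounds, $T_n$ is the round at which client $n$ transitions from a ''saving'' mode (sampling rate $q_n$) to a ''spending'' mode (sampling rate $q$), and $\epsilon_n^t$ is the Rényi-DP privacy spent by client $n$ in round $t$. *)

(* Defs.v *)
From mathcomp Require Import all_boot all_order all_algebra.
Set Implicit Arguments. Unset Strict Implicit. Unset Printing Implicit Defensive.
Import Order.TTheory GRing.Theory Num.Theory.
Local Open Scope ring_scope.

(* Rounds are indexed 1..T. [eps_prefix ... k] is the list
   [:: eps^1; ...; eps^k] produced by the recursion
   eps^t = (bar - sum_{tau<t} eps^tau)/(T-t+1) * (if t < Tn then (qn/q)^2 else 1). *)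
Fixpoint eps_prefix (R : realFieldType) (T Tn : nat) (bar qn q : R) (k : nat)
  : seq R :=
  match k with
  | 0%N => [::]
  | k'.+1 =>
      let prev := eps_prefix T Tn bar qn q k' in
      let t := k'.+1 in
      let base := (bar - \sum_(e <- prev) e) / (T - t + 1)%N%:R in
      rcons prev (if (t < Tn)%N then base * (qn / q) ^+ 2 else base)
  end.

Definition eps (R : realFieldType) (T Tn : nat) (bar qn q : R) (t : nat) : R :=
  nth 0 (eps_prefix T Tn bar qn q t) t.-1.

(* Main.v *)
Require Import Defs.
From mathcomp Require Import all_boot all_order all_algebra.
From mathcomp Require Import zify ring lra.
Import Order.TTheory GRing.Theory Num.Theory.
Local Open Scope ring_scope.

Section S.
Variables (R : realFieldType) (T Tn : nat) (bar qn q : R).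
Let P k := eps_prefix T Tn bar qn q k.
Let Sm k := \sum_(e <- P k) e.

Lemma size_P k : size (P k) = k.
Proof. by elim: k => //= k IH; rewrite /P /= size_rcons -/(P k) IH. Qed.

Lemma eps_step k : eps T Tn bar qn q k.+1 =
  (bar - Sm k) / (T - k.+1 + 1)%N%:R * (if (k.+1 < Tn)%N then (qn / q) ^+ 2 else 1).
Proof.
rewrite /eps /= -/(P k) nth_rcons size_P ltnn eqxx /Sm.
by case: ifP => _; rewrite ?mulr1.
Qed.

Lemma Sm_step k : Sm k.+1 = Sm k + eps T Tn bar qn q k.+1.
Proof.
rewrite /Sm /P /= -/(P k) -cats1 big_cat /= big_seq1; congr (_ + _).
by rewrite /eps /= -/(P k) nth_rcons size_P ltnn eqxx.
Qed.

Lemma B_prod k : (k < Tn)%N -> bar - Sm k =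
  bar * \prod_(1 <= s < k.+1) (1 - ((T - s + 1)%N%:R)^-1 * (qn / q) ^+ 2).
Proof.
elim: k => [|k IH] Hk.
  by rewrite /Sm /P /= big_nil big_geq // subr0 mulr1.
rewrite big_nat_recr //= mulrA -IH; last by lia.
rewrite Sm_step eps_step Hk.
rewrite mulrBr mulr1 opprD addrA; congr (_ - _); rewrite [RHS]mulrA; reflexivity.
Qed.
End S.

Theorem mainTheorem1 (R : realFieldType) (T Tn : nat) (bar qn q : R) :
  (1 <= T)%N -> (1 <= Tn)%N -> (Tn <= T)%N ->
  0 < bar -> 0 < qn -> 0 < q ->
  (forall t : nat, (1 <= t)%N -> (t < Tn)%N ->
     eps T Tn bar qn q t =
       bar / (T - t + 1)%N%:R * (qn / q) ^+ 2 *
       \prod_(1 <= i < t)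
          (1 - ((T - t + 1 + i)%N%:R)^-1 * (qn / q) ^+ 2))
  /\
  (forall t : nat, (Tn <= t)%N -> (t <= T)%N ->
     eps T Tn bar qn q t =
       bar / (T - Tn + 1)%N%:R *
       \prod_(1 <= i < Tn)
          (1 - ((T - Tn + 1 + i)%N%:R)^-1 * (qn / q) ^+ 2)).
Proof.
move=> HT HTn HTnT _ _ _.
have rev t : (t <= T)%N -> \prod_(1 <= s < t) (1 - ((T - s + 1)%N%:R)^-1 * (qn / q) ^+ 2)
   = \prod_(1 <= i < t) (1 - ((T - t + 1 + i)%N%:R)^-1 * (qn / q) ^+ 2) :> R.
  move=> Ht; rewrite big_nat_rev /=; apply: eq_big_nat => i /andP[H1 H2].
  by have -> : (T - (1 + t - i.+1) + 1 = T - t + 1 + i)%N by lia.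
have first t : (1 <= t)%N -> (t < Tn)%N -> eps T Tn bar qn q t =
    bar / (T - t + 1)%N%:R * (if (t < Tn)%N then (qn / q) ^+ 2 else 1) *
       \prod_(1 <= i < t) (1 - ((T - t + 1 + i)%N%:R)^-1 * (qn / q) ^+ 2).
  case: t => // k _ Hk; rewrite eps_step B_prod; last by lia.
  rewrite -rev; last by lia.
  rewrite -!mulrA; congr (_ * _); rewrite [LHS]mulrC -[LHS]mulrA; reflexivity.
split.
  by move=> t H1 H2; rewrite first // H2.
have base : eps T Tn bar qn q Tn = bar / (T - Tn + 1)%N%:R *
       \prod_(1 <= i < Tn) (1 - ((T - Tn + 1 + i)%N%:R)^-1 * (qn / q) ^+ 2).
  clear first; case: Tn HTn HTnT rev => // k _ HkT rev.
  rewrite eps_step B_prod // ltnn mulr1 -rev //.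
  by rewrite mulrAC.
move=> t Ht; elim: t Ht => [|t IH] Ht HtT; first by lia.
case: (ltngtP Tn t.+1) Ht => // [Hlt|Heq] _; last by rewrite -Heq base.
rewrite -IH; [|lia|lia].
case: t IH Hlt HtT => [|k] _ Hlt HtT; first by lia.
rewrite eps_step Sm_step eps_step.
have -> : (k.+2 < Tn)%N = false by lia.
have -> : (k.+1 < Tn)%N = false by lia.
rewrite !mulr1.
have -> : (T - k.+1 + 1 = (T - k.+2 + 1) + 1)%N by lia.
have Ha : (T - k.+2 + 1)%N%:R != 0 :> R by rewrite pnatr_eq0; lia.
rewrite natrD.
set a := (T - k.+2 + 1)%N%:R : R.
have Ha1 : a + 1 != 0 by rewrite /a -[1]/(1%N%:R) -natrD pnatr_eq0 addn1.
field. have h0 : 0 <= (T - k.+2)%:R :> R := ler0n _ _. by apply/andP; split; rewrite gt_eqF //; lra.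
Qed.
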